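(* Let $I_1\subset\mathbb{R}$ be an open interval and $I_2$ an open, relatively compact subinterval of $I_1$. For every integer $n\ge1$ and all $C_1,C_2>0$ there exists $\delta>0$ such that for every $C^1$ map $h:I_1\to\mathbb{R}$ with $\|h-\mathrm{id}\|_{1,I_1}<\delta$ and all $x,y\in I_2$ with $|y-x|<C_2|h^n(x)-x|$, we have $$|(h(y)-y)-(h(x)-x)|<C_1|h(x)-x|.$$
   Context: For an open set $J\subset\mathbb{R}$ and a $C^1$ map $u$ on $J$, $\|u\|_{1,J}=\sup_{x\in J}(|u(x)|+|u'(x)|)$. *)

(* Defs.v *)
From Stdlib Require Import Reals.
Open Scope R_scope.

Definition is_open_interval (I : R -> Prop) : Prop :=
  (exists x, I x) /\
  (forall x y z, I x -> I z -> x <= y <= z -> I y) /\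
  (forall x, I x -> exists e, 0 < e /\ forall y, Rabs (y - x) < e -> I y).

Definition C1_on (J : R -> Prop) (u u' : R -> R) : Prop :=
  (forall x, J x -> derivable_pt_lim u x (u' x)) /\
  (forall x, J x -> continuity_pt u' x).

(* ||u||_{1,J} < d, where ||u||_{1,J} = sup_{x in J} (|u x| + |u' x|). *)
Definition C1_norm_lt (J : R -> Prop) (u u' : R -> R) (d : R) : Prop :=
  exists M, M < d /\ forall x, J x -> Rabs (u x) + Rabs (u' x) <= M.

(* Main.v *)
Require Import Defs.
From Stdlib Require Import Reals Lra Lia.
Open Scope R_scope.

Lemma lip (I1 : R -> Prop) h h' M :
  is_open_interval I1 -> C1_on I1 h h' ->
  (forall x, I1 x -> Rabs (h x - x) + Rabs (h' x - 1) <= M) ->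
  forall u v, I1 u -> I1 v -> Rabs ((h u - u) - (h v - v)) <= M * Rabs (u - v).
Proof.
  intros [_ [Hc _]] [Hd _] HM.
  assert (key : forall u v, I1 u -> I1 v -> u < v ->
     Rabs ((h v - v) - (h u - u)) <= M * Rabs (v - u)).
  { intros u v Hu Hv Huv.
    destruct (MVT_cor2 (fun t => h t - t) (fun t => h' t - 1) u v Huv) as [c [Hc1 Hc2]].
    { intros c Hcc. assert (I1 c) by (apply (Hc u c v); auto).
      exact (derivable_pt_lim_minus h id c (h' c) 1 (Hd c H) (derivable_pt_lim_id c)). }
    rewrite Hc1, Rabs_mult. apply Rmult_le_compat_r. apply Rabs_pos.
    assert (I1 c) by (apply (Hc u c v); auto; lra).
    specialize (HM c H). pose proof (Rabs_pos (h c - c)). lra. }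
  intros u v Hu Hv. destruct (total_order_T u v) as [[H|H]|H].
  - rewrite Rabs_minus_sym, (Rabs_minus_sym u v). auto.
  - subst. replace (h v - v - (h v - v)) with 0 by ring.
    replace (v - v) with 0 by ring. rewrite Rabs_R0. lra.
  - auto.
Qed.

Theorem lemma3p11 (I1 : R -> Prop) (a b : R) :
  is_open_interval I1 ->
  a < b -> (forall z, a <= z <= b -> I1 z) ->
  forall (n : nat) (C1 C2 : R), (1 <= n)%nat -> 0 < C1 -> 0 < C2 ->
  exists delta, 0 < delta /\
    forall h h' : R -> R,
      C1_on I1 h h' ->
      C1_norm_lt I1 (fun t => h t - t) (fun t => h' t - 1) delta ->
      forall x y, a < x < b -> a < y < b ->
        Rabs (y - x) < C2 * Rabs (Nat.iter n h x - x) ->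
        Rabs ((h y - y) - (h x - x)) < C1 * Rabs (h x - x).
Proof.
  intros HI Hab Hsub n C1 C2 Hn HC1 HC2.
  destruct HI as [Hne [Hconv Hopen]].
  destruct (Hopen a (Hsub a ltac:(lra))) as [e1 [He1 Ha]].
  destruct (Hopen b (Hsub b ltac:(lra))) as [e2 [He2 Hb]].
  set (e := Rmin e1 e2 / 2).
  assert (He : 0 < e) by (unfold e, Rmin; destruct Rle_dec; lra).
  assert (Hae : I1 (a - e)).
  { apply Ha. unfold e, Rmin in *; destruct Rle_dec; rewrite Rabs_left1; lra. }
  assert (Hbe : I1 (b + e)).
  { apply Hb. unfold e, Rmin in *; destruct Rle_dec; rewrite Rabs_right; lra. }
  assert (HJ : forall z, a - e <= z <= b + e -> I1 z).
  { intros z Hz. apply (Hconv (a - e) z (b + e)); auto. }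
  set (P := 2 ^ n).
  assert (HP : 0 < P) by (apply pow_lt; lra).
  set (delta := Rmin 1 (Rmin (e / P) (C1 / (C2 * P)))).
  assert (Hd1 : delta <= 1) by apply Rmin_l.
  assert (Hd2 : delta <= e / P) by (eapply Rle_trans; [apply Rmin_r|apply Rmin_l]).
  assert (Hd3 : delta <= C1 / (C2 * P)) by (eapply Rle_trans; [apply Rmin_r|apply Rmin_r]).
  assert (Hdp : 0 < delta).
  { unfold delta. repeat apply Rmin_glb_lt; try lra.
    apply Rdiv_lt_0_compat; lra. apply Rdiv_lt_0_compat; nra. }
  exists delta. split; [exact Hdp|].
  intros h h' HC [M [HMd HM]] x y Hx Hy Hxy.
  assert (HM0 : 0 <= M).
  { specialize (HM x (Hsub x ltac:(lra))).
    pose proof (Rabs_pos (h x - x)). pose proof (Rabs_pos (h' x - 1)). lra. }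
  pose proof (lip I1 h h' M (conj Hne (conj Hconv Hopen)) HC HM) as L.
  set (d := Rabs (h x - x)).
  assert (Hd0 : 0 <= d) by apply Rabs_pos.
  assert (Hind : forall k, (k <= n)%nat ->
     I1 (Nat.iter k h x) /\ Rabs (Nat.iter k h x - x) <= (2 ^ k - 1) * d).
  { induction k as [|k IH]; intros Hk.
    - simpl. split. apply Hsub; lra. replace (x - x) with 0 by ring. rewrite Rabs_R0. lra.
    - destruct (IH ltac:(lia)) as [Hin Hb'].
      set (z := Nat.iter k h x) in *.
      assert (Hz : Rabs (h z - x) <= (2 ^ S k - 1) * d).
      { pose proof (L z x Hin (Hsub x ltac:(lra))) as Lz.
        replace (h z - x) with ((h z - z - (h x - x)) + (h x - x) + (z - x)) by ring.
        eapply Rle_trans; [apply Rabs_triang|].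
        eapply Rle_trans; [apply Rplus_le_compat_r; apply Rabs_triang|].
        fold d. simpl.
        assert (M * Rabs (z - x) <= Rabs (z - x)).
        { pose proof (Rabs_pos (z - x)). nra. }
        lra. }
      split; [|exact Hz].
      simpl. fold z. apply HJ.
      assert (Hk2 : 2 ^ S k <= P).
      { unfold P. apply Rle_pow; [lra|lia]. }
      assert (Hdd : d <= M) by (unfold d; specialize (HM x (Hsub x ltac:(lra)));
        pose proof (Rabs_pos (h' x - 1)); lra).
      assert (Hde : P * d <= e).
      { apply Rle_trans with (P * delta). apply Rmult_le_compat_l; lra.
        apply Rmult_le_reg_r with (/ P). apply Rinv_0_lt_compat; lra.
        replace (P * delta * / P) with delta by (field; lra). unfold Rdiv in Hd2; lra. }
      assert ((2 ^ S k - 1) * d <= e) by nra.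
      pose proof (Rle_abs (h z - x)). pose proof (Rle_abs (-(h z - x))). rewrite Rabs_Ropp in *. lra. }
  destruct (Hind n (Nat.le_refl n)) as [_ Hn'].
  assert (Hyx : Rabs (y - x) < C2 * P * d).
  { eapply Rlt_le_trans; [exact Hxy|]. unfold P. nra. }
  eapply Rle_lt_trans; [apply (L y x (Hsub y ltac:(lra)) (Hsub x ltac:(lra)))|].
  assert (Hfin : delta * Rabs (y - x) < C1 * d).
  { apply Rlt_le_trans with (delta * (C2 * P * d)).
    apply Rmult_lt_compat_l; lra.
    assert (delta * (C2 * P) <= C1).
    { apply Rmult_le_reg_r with (/ (C2 * P)). apply Rinv_0_lt_compat; nra.
      replace (delta * (C2 * P) * / (C2 * P)) with delta by (field; nra).
      unfold Rdiv in Hd3; lra. }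
    nra. }
  pose proof (Rabs_pos (y - x)). fold d. nra.
Qed.
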